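(* Let $p>3$ be a prime, let $m\le 2p$, and let $A_1,\ldots,A_m\subseteq[4p]$ with $|A_i|=2p$ for each $i$. Then there exists $C\subseteq[4p]$ with $|C|=3p$ such that $|C\cap A_i|\not\equiv0\pmod p$ for every $1\le i\le m$.
   Context: $[4p]=\{1,\dots,4p\}$. *)

(* Defs.v *)
From mathcomp Require Import all_boot.
Set Implicit Arguments. Unset Strict Implicit. Unset Printing Implicit Defensive.

(* Main.v *)
Require Import Defs.
From mathcomp Require Import all_boot.
From mathcomp Require Import zify.

Lemma card_bigcup_le (T : finType) m (F : 'I_m -> {set T}) :
  #|\bigcup_(i < m) F i| <= \sum_(i < m) #|F i|.
Proof.
elim/big_rec2: _ => [|i x y _ Hxy]; first by rewrite cards0.
apply: leq_trans (leq_card_setU _ _) _; exact: leq_add.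
Qed.

Lemma ffact2 n k : 2 ^ k * n ^_ k <= (2 * n) ^_ k.
Proof.
elim: k => [|k IH]; first by rewrite !ffactn0.
rewrite !ffactnSr expnS.
have H : 2 * (n - k) <= 2 * n - k by lia.
have -> : 2 * 2 ^ k * (n ^_ k * (n - k)) = (2 ^ k * n ^_ k) * (2 * (n - k)) by nia.
exact: leq_mul.
Qed.

Lemma binom_bound p : 2 ^ p * 'C(2 * p, p) <= 'C(4 * p, p).
Proof.
rewrite -(leq_pmul2r (fact_gt0 p)) -mulnA !bin_ffact.
have -> : 4 * p = 2 * (2 * p) by lia.
exact: ffact2.
Qed.

Lemma pow_bound p : 4 < p -> 4 * p < 2 ^ p.
Proof.
elim: p => // p IH Hp.
rewrite expnS.
case: (ltnP 4 p) => Hp4.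
  have := IH Hp4; lia.
have -> : p = 4 by lia.
by [].
Qed.

Theorem mainTheorem12 (p m : nat) (A : 'I_m -> {set 'I_(4 * p)}) :
  prime p -> 3 < p -> m <= 2 * p ->
  (forall i, #|A i| = 2 * p) ->
  exists C : {set 'I_(4 * p)},
    #|C| = 3 * p /\ (forall i, #|C :&: A i| %% p != 0).
Proof.
move=> Hpr Hp Hm HA.
have Hp5 : 4 < p.
  case: (p =P 4) => [E|NE]; first by rewrite E in Hpr.
  lia.
pose dr (B : {set 'I_(4 * p)}) := [set D : {set 'I_(4 * p)} | D \subset B & #|D| == p].
pose Bad := \bigcup_(i < m) (dr (A i) :|: dr (~: A i)).
have HAc i : #|~: A i| = 2 * p.
  have := cardsC (A i); rewrite card_ord HA; lia.
have Hbad : #|Bad| < #|[set D : {set 'I_(4 * p)} | #|D| == p]|.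
  rewrite card_draws card_ord.
  apply: leq_trans (binom_bound p).
  have H1 := @card_bigcup_le _ m (fun i => dr (A i) :|: dr (~: A i)).
  have H2 : \sum_(i < m) #|dr (A i) :|: dr (~: A i)| <=
            \sum_(i < m) (2 * 'C(2 * p, p)).
    apply: leq_sum => i _.
    apply: leq_trans (leq_card_setU _ _) _.
    by rewrite !cards_draws HA HAc addnn -mul2n.
  rewrite sum_nat_const card_ord in H2.
  have := @pow_bound p Hp5.
  have : 0 < 'C(2 * p, p) by rewrite bin_gt0; lia.
  rewrite /Bad. nia.
have : ~~ ([set D : {set 'I_(4 * p)} | #|D| == p] \subset Bad).
  apply/negP => /subset_leq_card; by rewrite leqNgt Hbad.
case/subsetPn => D HD HnB.
rewrite inE in HD; move/eqP: HD => HD.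
exists (~: D); split.
  have := cardsC D; rewrite card_ord HD; lia.
move=> i.
have Hi : ~~ (D \subset A i) && ~~ (D \subset ~: A i).
  apply/andP; split; apply/negP => Hs; move/negP: HnB; apply;
    apply/bigcupP; exists i => //; by rewrite /dr !inE Hs HD eqxx /= ?orbT ?andbT.
case/andP: Hi => Hs1 Hs2.
have e1 := cardsID (A i) D.
have x0 : 0 < #|D :&: A i|.
  rewrite card_gt0; apply: contra Hs2 => /eqP H0.
  apply/subsetP => x xD; rewrite inE; apply/negP => xA.
  have : x \in D :&: A i by rewrite inE xD xA.
  by rewrite H0 inE.
have x1 : #|D :&: A i| < p.
  have Hle := subset_leq_card (subsetIl D (A i)); rewrite HD in Hle.
  have Hne : #|D :&: A i| != #|D|.
    apply: contra Hs1 => /eqP H.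
    have -> : D = D :&: A i.
      by apply/eqP; rewrite eq_sym eqEcard subsetIl H leqnn.
    exact: subsetIr.
  rewrite HD in Hne; lia.
have e2 := cardsID D (A i).
have : #|~: D :&: A i| = #|A i :\: D| by rewrite setIC setDE.
move=> ->.
have -> : #|A i :\: D| = p + (p - #|D :&: A i|).
  move: e2; rewrite HA setIC; lia.
rewrite modnDl modn_small; lia.
Qed.
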